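(* For integers $n\ge1$ and $0\le k\le n-1$, $$\sum_{r=0}^{n}N_k^{n,r}=2^{k+1}(k+1)\frac{(2n-k-2)!}{n!\,(n-k-1)!}.$$ Equivalently, if two independent walkers start at the origin and each takes $n$ steps, each step being N or E with probability $1/2$ independently, then conditional on finishing at the same point, the probability that their vertex sets share exactly $k$ points other than the origin and the common endpoint is $$p(n,k)=\frac{2^{k+1}(k+1)(2n-k-2)!\,n!}{(n-k-1)!\,(2n)!}.$$
   Context: For $n\ge1$ and $0\le r\le n$, a lattice path from $(0,0)$ to $(r,n-r)$ is a sequence of lattice points $v_0=(0,0),\dots,v_n=(r,n-r)$ with each step $v_i-v_{i-1}\in\{(1,0)\ (\text{E}),(0,1)\ (\text{N})\}$; its vertex set is $\{v_0,\dots,v_n\}$. $N_k^{n,r}$ denotes the number of ordered pairs of lattice paths from $(0,0)$ to $(r,n-r)$ whose vertex sets share exactly $k$ points other than $(0,0)$ and $(r,n-r)$. *)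

(* Defs.v *)
From mathcomp Require Import all_boot.
Set Implicit Arguments. Unset Strict Implicit. Unset Printing Implicit Defensive.

(* A lattice path with n steps is encoded by its step word s : n.-tuple bool,
   true = E = (1,0), false = N = (0,1). *)

Definition vert (s : seq bool) (i : nat) : nat * nat :=
  let e := count id (take i s) in (e, i - e).

Definition vertices (s : seq bool) : seq (nat * nat) :=
  [seq vert s i | i <- iota 0 (size s).+1].

Definition shared (n r : nat) (s t : seq bool) : nat :=
  size [seq x <- undup (vertices s) |
         [&& x \in vertices t, x != (0, 0) & x != (r, n - r)]].

Definition Nk (k n r : nat) : nat :=
  #|[set pq : n.-tuple bool * n.-tuple bool |
      [&& vert pq.1 n == (r, n - r), vert pq.2 n == (r, n - r)
        & shared n r pq.1 pq.2 == k]]|.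

(* Main.v *)
Require Import Defs.
From mathcomp Require Import all_boot zify.
Set Implicit Arguments. Unset Strict Implicit. Unset Printing Implicit Defensive.

Fixpoint fp (N h : nat) : nat :=
  match N with
  | 0 => (h == 0 : nat)
  | N'.+1 => match h with 0 => 0 | h'.+1 => fp N' h' + fp N' h'.+2 end
  end.

Lemma fp_gt N h : N < h -> fp N h = 0.
Proof.
elim: N h => [|N IH] [|h] //= H.
by rewrite !IH //; lia.
Qed.

Lemma fp_rec1 N h : 0 < h -> fp N.+1 h = fp N h.-1 + fp N h.+1.
Proof. by case: h. Qed.

Lemma fp_rec2 N h : 1 < h -> fp N.+2 h = fp N (h - 2) + 2 * fp N h + fp N h.+2.
Proof.
case: h => [|[|h]] // _.
rewrite subn2 /=. lia.
Qed.

Definition CF (m z D : nat) : nat :=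
  if D == 0 then 2 ^ z * fp (2 * m - z) z
  else if z is z'.+1 then 2 ^ z' * fp (2 * m - z') (2 * D + z') else 0.

Lemma CF_big m z D : m < z -> CF m z D = 0.
Proof.
move=> H; rewrite /CF; case: eqP => HD.
  by rewrite fp_gt ?muln0 //; lia.
case: z H => [|z] H //; by rewrite fp_gt ?muln0 //; lia.
Qed.

Definition S m (e : bool) z D :=
  if e then (if z is z'.+1 then CF m z' D else 0) else CF m z D.

Lemma step0 m z : z <= m.+1 ->
  CF m.+1 z 0 = S m true z 0 + S m true z 0 + S m false z 1 + S m false z 1.
Proof.
move=> Hz; rewrite /S /CF /=.
case: z Hz => [|z] Hz.
  by rewrite subn0; have -> : 2 * m.+1 = (2 * m).+2 by lia.
have -> : 2 * m.+1 - z.+1 = (2 * m - z).+1 by lia.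
rewrite fp_rec1 //= expnS. have -> : 2 * 1 + z = z.+2 by lia. lia.
Qed.

Lemma step1 m z D : z <= m.+1 -> 0 < D ->
  CF m.+1 z D = S m false z D + S m false z D + S m (D.-1 == 0) z D.-1
     + S m false z D.+1.
Proof.
move=> Hz HD; rewrite /S /CF.
have -> : (D == 0) = false by lia.
case: z Hz => [|z] Hz.
  by case: (boolP (D.-1 == 0)) => H1 //; rewrite (negbTE H1).
have -> : 2 * m.+1 - z = (2 * m - z).+2 by lia.
rewrite fp_rec2; last by lia.
have E : 2 * D + z - 2 = 2 * D.-1 + z by lia.
case: (boolP (D.-1 == 0)) => HD1.
  have -> : D = 1 by lia.
  rewrite /= !muln1.
  have -> : 2 + z - 2 = z by lia. have -> : 2 * 2 + z = (2 + z).+2 by lia. lia.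
rewrite E /=.
have -> : 2 * D.+1 + z = (2 * D + z).+2 by lia.
lia.
Qed.

Fixpoint zc (a b : nat) (s t : seq bool) : nat :=
  match s, t with
  | x :: s', y :: t' => (a + x == b + y : nat) + zc (a + x) (b + y) s' t'
  | _, _ => 0
  end.

Definition C m z a b := \sum_(s : m.-tuple bool) \sum_(t : m.-tuple bool)
  ((a + count id s == b + count id t) && (zc a b s t == z) : nat).

Definition dist a b := (a - b) + (b - a).

Lemma zc_le a b s t : zc a b s t <= size s.
Proof.
elim: s a b t => [|x s IH] a b [|y t] //=.
have := IH (a + x) (b + y) t. case: (_ == _) => /=; lia.
Qed.

Lemma sum_tupleS m (F : (m.+1).-tuple bool -> nat) :
  \sum_(s : (m.+1).-tuple bool) F s =
  \sum_(x : bool) \sum_(s : m.-tuple bool) F [tuple of x :: s].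
Proof.
rewrite pair_bigA /=.
rewrite (reindex (fun p : bool * m.-tuple bool => [tuple of p.1 :: p.2])) //=.
apply: onW_bij.
exists (fun t : (m.+1).-tuple bool => (thead t, [tuple of behead t])).
  move=> [x s] /=; rewrite theadE; congr pair; by apply: val_inj.
by move=> t /=; rewrite -tuple_eta.
Qed.

Lemma C_big m z a b : m < z -> C m z a b = 0.
Proof.
move=> H; apply: big1 => s _; apply: big1 => t _.
have := zc_le a b s t; rewrite size_tuple => H2.
have -> : (zc a b s t == z) = false by lia.
by rewrite andbF.
Qed.

Lemma C0 z a b : C 0 z a b = CF 0 z (dist a b).
Proof.
rewrite /C (eq_bigr (fun _ => \sum_(t : 0.-tuple bool)
   ((a + count id ([tuple] : 0.-tuple bool) == b + count id ([tuple] : 0.-tuple bool))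
    && (zc a b [tuple] [tuple] == z) : nat))); last first.
  by move=> s _; rewrite (tuple0 s); apply: eq_bigr => t _; rewrite (tuple0 t).
rewrite sum_nat_const sum_nat_const !card_tuple /= /CF /dist.
rewrite !addn0 !expn0 !mul1n.
case: (a =P b) => [<-|H] /=.
  rewrite subnn eqxx /=; case: z => [|z] //=; by rewrite ?muln0.
have -> : (a - b + (b - a) == 0) = false by lia.
case: z => [|z] //=. have -> : (2 * (a - b + (b - a)) + z == 0) = false by lia. by rewrite muln0.
Qed.

Lemma Ce m z a b (e : bool) :
  \sum_(s : m.-tuple bool) \sum_(t : m.-tuple bool)
    ((a + count id s == b + count id t) && (e + zc a b s t == z) : nat)
  = if e then (if z is z'.+1 then C m z' a b else 0) else C m z a b.
Proof.
case: e => /=; last by [].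
case: z => [|z].
  by apply: big1 => s _; apply: big1 => t _; rewrite andbF.
by [].
Qed.

Lemma Cxy m z a b x y :
  (forall z a b, C m z a b = CF m z (dist a b)) ->
  \sum_(s : m.-tuple bool) \sum_(t : m.-tuple bool)
    ((a + (x + count id s) == b + (y + count id t)) &&
     ((a + x == b + y) + zc (a + x) (b + y) s t == z) : nat)
  = S m (a + x == b + y) z (dist (a + x) (b + y)).
Proof.
move=> IH.
under eq_bigr => s _ do under eq_bigr => t _ do rewrite !addnA.
rewrite Ce /S; case: (a + x == b + y); last by rewrite IH.
by case: z.
Qed.

Lemma C_CF m z a b : C m z a b = CF m z (dist a b).
Proof.
elim: m z a b => [|m IH] z a b; first exact: C0.
case: (ltnP m.+1 z) => Hz.
  by rewrite C_big // CF_big.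
rewrite /C sum_tupleS.
under eq_bigr => x _ do under eq_bigr => s _ do rewrite sum_tupleS.
under eq_bigr => x _ do rewrite exchange_big.
rewrite big_bool /= big_bool /= big_bool /=.
rewrite !Cxy //.
rewrite /dist !addn0 !addn1.
case: (ltngtP a b) => H.
- have E1 : b.+1 - a.+1 = b - a by lia.
  rewrite subSS E1.
  have -> : a.+1 - b = 0 by lia.
  have -> : a - b = 0 by lia.
  have -> : a - b.+1 = 0 by lia.
  have -> : b - a.+1 = (b - a).-1 by lia.
  have -> : b.+1 - a = (b - a).+1 by lia.
  rewrite !add0n eqSS.
  have -> : (a == b) = false by lia.
  have -> : (a == b.+1) = false by lia.
  have -> : (a.+1 == b) = ((b - a).-1 == 0) by lia.
  rewrite (step1 (m := m) Hz); last by lia.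
  lia.
- rewrite !subSS.
  have -> : b - a.+1 = 0 by lia.
  have -> : b - a = 0 by lia.
  have -> : b.+1 - a = 0 by lia.
  have -> : a - b.+1 = (a - b).-1 by lia.
  have -> : a.+1 - b = (a - b).+1 by lia.
  rewrite !addn0 eqSS.
  have -> : (a == b) = false by lia.
  have -> : (a.+1 == b) = false by lia.
  have -> : (a == b.+1) = ((a - b).-1 == 0) by lia.
  rewrite (step1 (m := m) Hz); last by lia.
  lia.
- subst b. rewrite !subSS !subnn /= eqSS eqxx.
  have -> : a.+1 - a = 1 by lia.
  have -> : a - a.+1 = 0 by lia.
  have -> : (a.+1 == a) = false by lia.
  have -> : (a == a.+1) = false by lia.
  rewrite !addn0 !add0n (step0 (m := m) Hz) /S. lia.
Qed.

Lemma fp_0 N : fp N 0 = (N == 0).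
Proof. by case: N. Qed.

Lemma key X Y A B F p' q' N' :
  X * (A * (q'.+1 * B)) = (p' - q'.+1) * F ->
  Y * (p'.+1 * A * B) = (p'.+1 - q') * F ->
  N' = p' + q' -> q'.+1 < p' ->
  (X + Y) * (p'.+1 * A * (q'.+1 * B)) = (p'.+1 - q'.+1) * (N'.+1 * F).
Proof.
move=> H1 H2 HN Hq.
have E : (X + Y) * (p'.+1 * A * (q'.+1 * B)) =
   p'.+1 * (X * (A * (q'.+1 * B))) + q'.+1 * (Y * (p'.+1 * A * B)).
  nia.
rewrite E H1 H2 !mulnA -!mulnDl; congr (_ * _).
subst N'; nia.
Qed.

Lemma ballot N : forall p q, p + q = N -> q < p ->
  fp N (p - q) * (p`! * q`!) = (p - q) * N.-1`!.
Proof.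
elim: N => [|N IH] p q HN Hq; first by lia.
case: q HN Hq => [|q'] HN Hq.
  have -> : p = N.+1 by lia.
  rewrite subn0 fact0 muln1 fp_rec1 //= (fp_gt (N := N) (h := N.+2)) // addn0.
  case: N IH {HN Hq} => [|N] IH; first by [].
  have := IH N.+1 0 (addn0 _) (ltn0Sn _).
  rewrite subn0 fact0 muln1 /= => H.
  rewrite factS mulnCA H [in RHS]factS. lia.
case: p HN Hq => [|p'] HN Hq; first by lia.
rewrite subSS fp_rec1; last by lia.
case: (ltngtP q'.+1 p') => Hpq; [ | by lia | ].
- case: N IH HN => [|N'] IH HN; first by lia.
  have H1 := IH p' q'.+1 ltac:(lia) Hpq.
  have H2 := IH p'.+1 q' ltac:(lia) ltac:(lia).
  have -> : (p' - q').-1 = p' - q'.+1 by lia.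
  have -> : (p' - q').+1 = p'.+1 - q' by lia.
  rewrite -subSS.
  rewrite !factS in H1 H2 *.
  apply: key => //; lia.
- subst p'.
  have -> : (q'.+1 - q').-1 = 0 by lia.
  have -> : (q'.+1 - q').+1 = q'.+2 - q' by lia.
  rewrite fp_0.
  have -> : (N == 0) = false by lia.
  have H2 := IH q'.+2 q' ltac:(lia) ltac:(lia).
  have E2 : q'.+2 - q' = 2 by lia. rewrite E2 in H2.
  have -> : q'.+1 - q' = 1 by lia.
  have FN : N`! = N * N.-1`! by case: N HN {IH H2} => [|N] //= _; rewrite factS.
  rewrite FN add0n mul1n [q'.+1`!]factS E2.
  move: H2; set X := fp N 2; set A := (q'.+2)`!; set B := q'`!; set F := N.-1`! => H2.
  have -> : N = q'.+1 * 2 by lia.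
  rewrite -mulnA -H2. nia.
Qed.

Lemma E_le (s : seq bool) i : count id (take i s) <= i.
Proof. by rewrite (leq_trans (count_size _ _)) // size_take; case: ltnP => // /ltnW. Qed.

Lemma zc_count a b (s t : seq bool) : size s = size t ->
  zc a b s t = count (fun i => a + count id (take i s) == b + count id (take i t))
                     (iota 1 (size s)).
Proof.
elim: s a b t => [|x s IH] a b [|y t] //= [] Hst.
rewrite IH // (iotaDl 1 1) count_map; congr (_ + _).
  by rewrite !take0 /= !addn0.
apply: eq_count => i /=. by rewrite !addnA.
Qed.

Lemma vert_inj (s : seq bool) i j : vert s i = vert s j -> i = j.
Proof.
rewrite /vert => [[H1 H2]].
have := E_le s i; have := E_le s j. lia.
Qed.

Lemma mem_vert (s t : seq bool) i :
  (vert s i \in vertices t) = (i <= size t) && (vert s i == vert t i).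
Proof.
apply/mapP/andP.
  move=> [j Hj E]; rewrite mem_iota in Hj.
  have Hij : i = j.
    move: E; rewrite /vert => [[H1 H2]].
    have := E_le s i; have := E_le t j. lia.
  subst j; split; [lia | by rewrite E].
move=> [Hi /eqP E]; exists i => //; rewrite mem_iota; lia.
Qed.

Lemma vert_eq (s t : seq bool) i :
  (vert s i == vert t i) = (count id (take i s) == count id (take i t)).
Proof.
rewrite /vert xpair_eqE; case: eqP => [->|] //=; by rewrite eqxx.
Qed.

Lemma shared_zc n (s t : seq bool) : 0 < n -> size s = n -> size t = n ->
  count id s = count id t ->
  (shared n (count id s) s t).+1 = zc 0 0 s t.
Proof.
move=> Hn Hs Ht Hc.
rewrite zc_count; last by rewrite Hs Ht.
rewrite /shared /vertices undup_id; last first.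
  by rewrite map_inj_in_uniq ?iota_uniq // => i j _ _; apply: vert_inj.
rewrite size_filter count_map Hs.
have Hv : vert s n = (count id s, n - count id s).
  by rewrite /vert -Hs take_size.
rewrite (@eq_in_count _ _ (fun i => (count id (take i s) == count id (take i t))
          && (0 < i) && (i < n))); last first.
  move=> i; rewrite mem_iota => /andP [_ Hi] /=.
  rewrite mem_vert Ht vert_eq.
  have -> : (i <= n) = true by lia.
  rewrite /=.
  have -> : (vert s i != (0, 0)) = (0 < i).
    rewrite /vert xpair_eqE; have := E_le s i. lia.
  have -> : (vert s i != (count id s, n - count id s)) = (i < n).
    rewrite -Hv. case: (ltnP i n) => H.
      by apply/negP => /eqP /vert_inj; lia.
    have -> : i = n by lia. by rewrite eqxx.
  by rewrite andbA.
have E1 : iota 1 n = iota 1 n.-1 ++ [:: n].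
  by rewrite -{1}(prednK Hn) -[n.-1.+1]addn1 iotaD add1n prednK.
have -> : iota 0 n.+1 = 0 :: iota 1 n by [].
rewrite E1 /= !count_cat /=.
have Hq : count id (take n s) == count id (take n t).
  by rewrite -{1}Hs -Ht !take_size Hc.
rewrite !add0n Hq ltnn /= !addn0 addn1; congr (_.+1).
rewrite andbF /= ltnn andbF addn0 add0n.
apply: eq_in_count => i; rewrite mem_iota => /andP [H1 H2] /=.
have -> : (0 < i) = true by lia. have -> : (i < n) = true by lia.
by rewrite !andbT.
Qed.

Lemma sum_pick n c (Q : bool) : c < n.+1 ->
  \sum_(0 <= r < n.+1) ((r == c) && Q : nat) = Q.
Proof.
move=> Hc; rewrite big_mkord (bigD1 (Ordinal Hc)) //= eqxx /=.
rewrite big1 ?addn0 // => i Hi.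
have -> : (nat_of_ord i == c) = false.
  by apply/negP => /eqP E; move: Hi; apply/negP; rewrite negbK; apply/eqP/val_inj.
by [].
Qed.

Lemma pair_term n k (s t : n.-tuple bool) : 0 < n ->
  \sum_(0 <= r < n.+1)
    ([&& vert s n == (r, n - r), vert t n == (r, n - r)
       & shared n r s t == k] : nat)
  = ((0 + count id s == 0 + count id t) && (zc 0 0 s t == k.+1)).
Proof.
move=> Hn.
have Hvs : vert s n = (count id s, n - count id s).
  by rewrite /vert take_oversize // size_tuple.
have Hvt : vert t n = (count id t, n - count id t).
  by rewrite /vert take_oversize // size_tuple.
have Hcs : count id s <= n by rewrite -{2}(size_tuple s) count_size.
rewrite (eq_big_nat _ _ (F2 := fun r => ((r == count id s) &&
    ((count id s == count id t) && (shared n (count id s) s t == k)) : nat))).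
  rewrite sum_pick; last by lia.
  rewrite !add0n; case: eqP => //= Hc.
  by rewrite -(shared_zc Hn (size_tuple s) (size_tuple t) Hc) eqSS.
move=> r Hr; rewrite Hvs Hvt !xpair_eqE.
case: (eqVneq r (count id s)) => [->|Hne] /=.
  rewrite !eqxx /=; case: (eqVneq (count id t) (count id s)) => [->|H] /=; [by rewrite !eqxx | have H2 : (count id s == count id t) = false by lia; by rewrite (negbTE H) H2].
all: by [].
Qed.

Lemma sumNk n k : 0 < n -> \sum_(0 <= r < n.+1) Nk k n r = C n k.+1 0 0.
Proof.
move=> Hn; rewrite /Nk.
under eq_bigr => r _ do rewrite -sum1dep_card big_mkcond /=.
rewrite exchange_big /C pair_bigA /=.
apply: eq_bigr => [[s t]] _ /=.
rewrite -(pair_term k s t Hn).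
by apply: eq_bigr => r _; case: ifP.
Qed.

Unset Implicit Arguments.
Theorem mainTheorem7 (n k : nat) (hn : 1 <= n) (hk : k <= n - 1) :
  (\sum_(0 <= r < n.+1) Nk k n r) * (n`! * (n - k - 1)`!)
  = 2 ^ k.+1 * k.+1 * (2 * n - k - 2)`!.
Proof.
rewrite sumNk // C_CF /CF /dist /=.
have H := ballot (p := n) (q := n - k - 1) (N := 2 * n - k.+1) ltac:(lia) ltac:(lia).
have E1 : n - (n - k - 1) = k.+1 by lia.
have E2 : (2 * n - k.+1).-1 = 2 * n - k - 2 by lia.
rewrite E1 E2 in H.
by rewrite -mulnA H mulnA.
Qed.
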